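(* Let $(D,T,\lambda)$ be a complete structured DNNF and $Z\subseteq\mathrm{var}(D)$. Let $t$ be a non-leaf node of $T$ with children $t_1,t_2$. Let $\tau_1:\mathsf{kept}(t_1)\to\{0,1\}$ be of shape $S_1$ and $\tau_2:\mathsf{kept}(t_2)\to\{0,1\}$ be of shape $S_2$. Then $\tau=\tau_1\cup\tau_2$ (an assignment of $\mathsf{kept}(t)$) is of shape $S_1\bowtie S_2$.
   Context: A DNNF is a Boolean circuit whose input gates are labeled by literals $x$ or $\neg x$, whose other gates are $\wedge$-gates and $\vee$-gates, and in which every $\wedge$-gate is decomposable: the subcircuits rooted at distinct inputs of it mention pairwise disjoint sets of variables. For a gate $v$, $D_v$ denotes the subcircuit rooted at $v$. A vtree for a variable set $X$ is a rooted tree in which every non-leaf node has exactly two children and whose leaves are in bijection with $X$. A complete structured DNNF $(D,T,\lambda)$ consists of a DNNF $D$, a vtree $T$ for $\mathrm{var}(D)$, and a map $\lambda$ assigning to every node $t$ of $T$ a set $\lambda(t)$ of gates of $D$ such that: (i) every gate $u$ of $D$ lies in $\lambda(t_u)$ for exactly one node $t_u$; (ii) if $t$ is a leaf labeled $x$ then $\lambda(t)$ contains only input gates labeled $x$ or $\neg x$; (iii) for no non-leaf node $t$ does $\lambda(t)$ contain an input gate; (iv) every $\wedge$-gate $u$ has exactly two inputs $v_1,v_2$ and $t_{v_1}\ne t_{v_2}$; (v) for every wire from a gate $u$ into a gate $v$, either $v$ is an $\wedge$-gate, $u$ is a $\vee$-gate or an input gate, and $t_u$ is a child of $t_v$; or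 $v$ is a $\vee$-gate, $u$ is an $\wedge$-gate and $t_u=t_v$. For a node $t$ of $T$, $\mathrm{var}(t)$ is the set of variables labeling leaves of the subtree rooted at $t$, $\mathsf{forgot}(t)=Z\cap\mathrm{var}(t)$ and $\mathsf{kept}(t)=\mathrm{var}(t)\setminus\mathsf{forgot}(t)$. Let $O_t$ be the set of gates of $\lambda(t)$ that are not $\wedge$-gates (i.e. the $\vee$-gates of $\lambda(t)$ if $t$ is internal, the input gates of $\lambda(t)$ if $t$ is a leaf). An assignment $\tau:\mathsf{kept}(t)\to\{0,1\}$ is of shape $S\subseteq O_t$ iff $S=\{s\in O_t\mid \exists\sigma:\mathsf{forgot}(t)\to\{0,1\},\ \tau\cup\sigma\text{ satisfies }D_s\}$. For a non-leaf $t$ with children $t_1,t_2$ and $S_1\subseteq O_{t_1}$, $S_2\subseteq O_{t_2}$, $S_1\bowtie S_2\subseteq O_t$ is the set of gates $s\in O_t$ that evaluate to $1$ when every gate of $S_1\cup S_2$ is replaced by the constant $1$ and every gate of $(O_{t_1}\setminus S_1)\cup(O_{t_2}\setminus S_2)$ by the constant $0$. *)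

(* Defs.v *)
From HB Require Import structures.
From mathcomp Require Import all_boot.

Set Implicit Arguments.
Unset Strict Implicit.
Unset Printing Implicit Defensive.

Inductive vtree (V : Type) := VLeaf of V | VNode of vtree V & vtree V.
Arguments VLeaf {V}.
Arguments VNode {V}.

Section VtreeEq.
Variable V : eqType.
Fixpoint vtree_eqb (s t : vtree V) : bool :=
  match s, t with
  | VLeaf x, VLeaf y => x == y
  | VNode a b, VNode c d => vtree_eqb a c && vtree_eqb b d
  | _, _ => false
  end.
Lemma vtree_eqP : Equality.axiom vtree_eqb.
Proof.
elim=> [x|a IHa b IHb] [y|c d] /=; try by constructor.
- by apply: (iffP eqP) => [->|[]].
- case: (IHa c) => [->|ne]; case: (IHb d) => [->|ne'] /=; constructor;
    congruence.
Qed.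
HB.instance Definition _ := hasDecEq.Build (vtree V) vtree_eqP.
End VtreeEq.

Fixpoint leaves V (t : vtree V) : seq V :=
  match t with VLeaf x => [:: x] | VNode l r => leaves l ++ leaves r end.

(* the nodes of T, each node identified with the subtree rooted at it *)
Fixpoint subtrees V (t : vtree V) : seq (vtree V) :=
  t :: match t with VLeaf _ => [::] | VNode l r => subtrees l ++ subtrees r end.

Definition vvar (V : finType) (t : vtree V) : {set V} := [set x | x \in leaves t].

Definition vtree_for (V : finType) (T : vtree V) (X : {set V}) : Prop :=
  uniq (leaves T) /\ vvar T = X.

Definition child_of V (c p : vtree V) : Prop :=
  exists l r, p = VNode l r /\ (c = l \/ c = r).

(* kind of a gate: input gate labelled by a literal (x, true) = x, (x, false) = ~x *)
Inductive gkind (V : Type) := GLit of V & bool | GAnd | GOr.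
Arguments GAnd {V}.
Arguments GOr {V}.

(* wire u v : there is a wire from gate u into gate v (u is an input of v) *)
Record circuit (V G : finType) := Circuit { kind : G -> gkind V; wire : rel G }.

Section Circ.
Variables (V G : finType) (D : circuit V G).

Definition is_input g := if kind D g is GLit _ _ then true else false.
Definition is_and g := if kind D g is GAnd then true else false.
Definition is_or g := if kind D g is GOr then true else false.
Definition litvar g : option V := if kind D g is GLit x _ then Some x else None.

Definition eval_step (ov : G -> option bool) (a : V -> bool) (f : G -> bool) (g : G) : bool :=
  match ov g with
  | Some b => b
  | None =>
    match kind D g with
    | GLit x b => a x == b
    | GAnd => [forall u, wire D u g ==> f u]
    | GOr => [exists u, wire D u g && f u]
    end
  end.

(* value of gate g under assignment a (with overrides ov); for an acyclic circuit,
   #|G| rounds suffice to reach the fixpoint, i.e. the usual circuit value *)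
Definition evalo (ov : G -> option bool) (a : V -> bool) (g : G) : bool :=
  iter #|G| (eval_step ov a) (fun _ => false) g.

Definition sat (a : V -> bool) (g : G) : bool := evalo (fun _ => None) a g.

(* g' is a gate of the subcircuit D_g rooted at g *)
Definition below (g g' : G) : bool := connect (fun x y => wire D y x) g g'.

Definition varsub (g : G) : {set V} :=
  [set x | [exists g', below g g' && (litvar g' == Some x)]].

Definition varD : {set V} := [set x | [exists g, litvar g == Some x]].

Definition acyclic : Prop := forall u v, wire D u v -> ~~ connect (wire D) v u.

Definition is_dnnf : Prop :=
  [/\ acyclic,
      (forall u v, wire D u v -> ~~ is_input v) &
      (forall v u1 u2, is_and v -> wire D u1 v -> wire D u2 v -> u1 != u2 ->
         [disjoint varsub u1 & varsub u2])].

(* ---------- complete structured DNNF (D, T, lambda) ----------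
   lambda is given by tn : G -> vtree V, with lambda(t) = {u | tn u = t};
   condition (i) is that tn u is a node of T. *)
Definition complete_sdnnf (T : vtree V) (tn : G -> vtree V) : Prop :=
  is_dnnf /\ vtree_for T varD /\
      (forall u, tn u \in subtrees T) /\
      (forall u x, tn u = VLeaf x -> exists b, kind D u = GLit x b) /\
      (forall u l r, tn u = VNode l r -> ~~ is_input u) /\
      (forall u, is_and u -> exists v1 v2, [/\ v1 != v2,
                    (forall w, wire D w u <-> (w = v1 \/ w = v2)) & tn v1 <> tn v2]) /\
      (forall u v, wire D u v ->
         (is_and v /\ ~~ is_and u /\ child_of (tn u) (tn v)) \/
         (is_or v /\ is_and u /\ tn u = tn v)).

Variables (tn : G -> vtree V) (Z : {set V}).

Definition forgot (t : vtree V) : {set V} := Z :&: vvar t.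
Definition kept (t : vtree V) : {set V} := vvar t :\: forgot t.

Definition Ogates (t : vtree V) : {set G} := [set u | (tn u == t) && ~~ is_and u].

(* the assignment tau \cup sigma on var(t) (tau read on kept(t), sigma on forgot(t));
   variables outside var(t) get the value false (irrelevant) *)
Definition merge (t : vtree V) (tau sigma : V -> bool) (x : V) : bool :=
  if x \in kept t then tau x else if x \in forgot t then sigma x else false.

(* tau : kept(t) -> {0,1} (only its values on kept(t) matter) is of shape S *)
Definition of_shape (t : vtree V) (tau : V -> bool) (S : {set G}) : Prop :=
  S = [set s | (s \in Ogates t) &&
               [exists sigma : {ffun V -> bool}, sat (merge t tau sigma) s]].

Definition bowtie (t t1 t2 : vtree V) (S1 S2 : {set G}) : {set G} :=
  let ov u := if u \in S1 :|: S2 then Some true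
              else if u \in (Ogates t1 :\: S1) :|: (Ogates t2 :\: S2) then Some false
              else None in
  [set s | (s \in Ogates t) && evalo ov (fun _ => false) s].

Definition union_asg (t1 : vtree V) (tau1 tau2 : V -> bool) (x : V) : bool :=
  if x \in vvar t1 then tau1 x else tau2 x.

End Circ.

(* Main.v *)
Require Import Defs.
From HB Require Import structures.
From mathcomp Require Import all_boot.
From mathcomp Require Import zify.
Set Implicit Arguments.
Unset Strict Implicit.

Lemma step_congr (V G : finType) (D : circuit V G) ov a (f f' : G -> bool) g :
  (forall w, wire D w g -> f w = f' w) ->
  eval_step D ov a f g = eval_step D ov a f' g.
Proof.
move=> H; rewrite /eval_step; case: (ov g) => // ; case: (kind D g) => //.
- apply: eq_forallb => w; case Hw: (wire D w g) => //=; by rewrite H.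
- apply: eq_existsb => w; case Hw: (wire D w g) => //=; by rewrite H.
Qed.

Lemma evalo_fix (V G : finType) (D : circuit V G) ov a g :
  acyclic D -> evalo D ov a g = eval_step D ov a (evalo D ov a) g.
Proof.
move=> Hac.
pose f n := iter n (eval_step D ov a) (fun _ => false).
have key : forall n g, f n g != f n.+1 g ->
    n < #|[set x | connect (wire D) x g]|.
  elim=> [|n IH] h Hne.
    by apply/card_gt0P; exists h; rewrite inE connect0.
  case: (boolP [exists w, wire D w h && (f n w != f n.+1 w)]).
    case/existsP=> w /andP [Hw Hne'].
    have := IH w Hne'.
    have Hpr : [set x | connect (wire D) x w] \proper [set x | connect (wire D) x h].
      apply/properP; split.
        apply/subsetP=> x; rewrite !inE => Hx.
        by apply: connect_trans Hx (connect1 Hw).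
      exists h; first by rewrite inE connect0.
      by rewrite inE; apply: Hac.
    move/proper_card: Hpr; lia.
  rewrite negb_exists => /forallP Hall.
  exfalso; move: Hne; apply/negP; rewrite negbK.
  rewrite /f !iterS; apply/eqP; apply: step_congr => w Hw.
  by move: (Hall w); rewrite Hw /= negbK => /eqP.
have : f #|G| g == f #|G|.+1 g.
  apply/negPn/negP => /key; rewrite ltnNge; move/negP; apply.
  exact: max_card.
by rewrite /evalo /f iterS => /eqP.
Qed.

Lemma sub_refl (V : eqType) (t : vtree V) : t \in subtrees t.
Proof. by case: t => * /=; rewrite inE eqxx. Qed.

Lemma sub_trans (V : eqType) (s t r : vtree V) :
  s \in subtrees t -> t \in subtrees r -> s \in subtrees r.
Proof.
move=> Hs; elim: r => [x|l IHl rr IHr] Ht.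
  by move: Ht; rewrite inE => /eqP Ht; subst t.
move: Ht; rewrite inE; case/orP => [/eqP Ht|].
  by subst t.
by rewrite mem_cat => /orP [/IHl|/IHr] H; rewrite inE mem_cat H ?orbT.
Qed.

Lemma sub_leaves (V : eqType) (s t : vtree V) :
  s \in subtrees t -> {subset leaves s <= leaves t}.
Proof.
elim: t => [x|l IHl r IHr] /=; rewrite inE.
  by move=> /eqP ->.
case/orP => [/eqP -> //|]; rewrite mem_cat => /orP [/IHl|/IHr] H y /H Hy;
  by rewrite mem_cat Hy ?orbT.
Qed.

Lemma sub_uniq (V : eqType) (s t : vtree V) :
  s \in subtrees t -> uniq (leaves t) -> uniq (leaves s).
Proof.
elim: t => [x|l IHl r IHr] /=; rewrite inE.
  by move=> /eqP ->.
case/orP => [/eqP -> //|]; rewrite mem_cat cat_uniq => /orP [/IHl|/IHr] H;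
  case/and3P => *; exact: H.
Qed.

Lemma child_sub (V : eqType) (c p : vtree V) : child_of c p -> c \in subtrees p.
Proof.
case=> l [r [-> [->|->]]] /=; rewrite inE mem_cat sub_refl ?orbT //.
Qed.

Lemma leaves_nil (V : eqType) (t : vtree V) : leaves t != [::].
Proof. by elim: t => //= l IHl r _; case: (leaves l) IHl. Qed.

Lemma iter_agree (V G : finType) (D : circuit V G) ov n :
  forall g (a a' : V -> bool), (forall x, x \in varsub D g -> a x = a' x) ->
  iter n (eval_step D ov a) (fun _ => false) g =
  iter n (eval_step D ov a') (fun _ => false) g.
Proof.
elim: n => // n IH g a a' Hag; rewrite !iterS.
transitivity (eval_step D ov a (iter n (eval_step D ov a') (fun _ => false)) g).
  apply: step_congr => w Hw; apply: IH => x Hx; apply: Hag.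
  move: Hx; rewrite !inE => /existsP [g' /andP [Hb Hl]].
  apply/existsP; exists g'; rewrite Hl andbT.
  exact: connect_trans (connect1 (Hw : (fun x y => wire D y x) g w)) Hb.
rewrite /eval_step; case: (ov g) => //; case E: (kind D g) => [x b| |] //.
rewrite Hag //. rewrite inE; apply/existsP; exists g.
rewrite /below connect0 /=. rewrite /litvar E. done.
Qed.

Lemma node_neql (V : eqType) (l r : vtree V) : l != VNode l r.
Proof.
elim: l r => [x|a IHa b _] r; apply/eqP => //.
case=> Ha _; by move/eqP: (IHa b); rewrite -Ha.
Qed.

Lemma node_neqr (V : eqType) (l r : vtree V) : r != VNode l r.
Proof.
elim: r l => [x|a _ b IHb] l; apply/eqP => //.
case=> _ Hb; by move/eqP: (IHb a); rewrite -Hb.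
Qed.

Lemma wire_sub (V G : finType) (D : circuit V G) T tn u v :
  complete_sdnnf D T tn -> wire D u v -> tn u \in subtrees (tn v).
Proof.
move=> [_ [_ [_ [_ [_ [_ Hv]]]]]] /Hv [[_ [_ /child_sub //]]|[_ [_ ->]]].
exact: sub_refl.
Qed.

Lemma below_sub (V G : finType) (D : circuit V G) T tn g g' :
  complete_sdnnf D T tn -> below D g g' -> tn g' \in subtrees (tn g).
Proof.
move=> Hc /connectP [p Hp ->].
elim: p g Hp => [|y p IH] g /=; first by rewrite sub_refl.
case/andP => Hw Hp; exact: sub_trans (IH y Hp) (wire_sub Hc Hw).
Qed.

Lemma varsub_vvar (V G : finType) (D : circuit V G) T tn g x :
  complete_sdnnf D T tn -> x \in varsub D g -> x \in vvar (tn g).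
Proof.
move=> Hc; rewrite !inE => /existsP [g' /andP [Hb Hl]].
have Hs := below_sub Hc Hb.
case: Hc => _ [_ [_ [Hii [Hiii _]]]].
move: Hl; rewrite /litvar; case E: (kind D g') => [y b| |] // /eqP [Hy]; subst y.
apply: (sub_leaves Hs).
case E2: (tn g') => [z|l r].
  have [b' Hk] := Hii _ _ E2; move: E; rewrite Hk => -[->] _.
  by rewrite inE.
by move: (Hiii _ _ _ E2); rewrite /is_input E.
Qed.

Lemma forall_two (G : finType) (e : G -> bool) (f : G -> bool) a b :
  (forall w, e w <-> (w = a \/ w = b)) ->
  [forall w, e w ==> f w] = f a && f b.
Proof.
move=> H; apply/forallP/andP.
  move=> Hf; split.
    by move: (Hf a); have -> : e a by apply/H; left.
  by move: (Hf b); have -> : e b by apply/H; right.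
case=> Ha Hb w; apply/implyP => /H [->|->] //.
Qed.


Lemma child_node (V : eqType) (c l r : vtree V) : child_of c (VNode l r) -> c = l \/ c = r.
Proof. by case=> l' [r' [[-> ->] H]]. Qed.

Lemma mergeL (V : finType) (Z : {set V}) t1 t2 tau1 tau2 (s s' : V -> bool) x :
  x \in leaves t1 -> s x = s' x ->
  Defs.merge Z (VNode t1 t2) (union_asg t1 tau1 tau2) s x = Defs.merge Z t1 tau1 s' x.
Proof.
move=> Hx Hs; rewrite /Defs.merge /kept /forgot /vvar /union_asg !inE /= mem_cat Hx /=.
by case: (x \in Z).
Qed.

Lemma mergeR (V : finType) (Z : {set V}) t1 t2 tau1 tau2 (s s' : V -> bool) x :
  x \in leaves t2 -> x \notin leaves t1 -> s x = s' x ->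
  Defs.merge Z (VNode t1 t2) (union_asg t1 tau1 tau2) s x = Defs.merge Z t2 tau2 s' x.
Proof.
move=> Hx Hx1 Hs; rewrite /Defs.merge /kept /forgot /vvar /union_asg !inE /= mem_cat Hx (negbTE Hx1) /= ?orbT.
by case: (x \in Z).
Qed.

Theorem lemma3 (V G : finType) (D : circuit V G) (T : vtree V) (tn : G -> vtree V)
    (Z : {set V}) (t1 t2 : vtree V) (tau1 tau2 : V -> bool) (S1 S2 : {set G}) :
  complete_sdnnf D T tn ->
  Z \subset varD D ->
  VNode t1 t2 \in subtrees T ->
  of_shape D tn Z t1 tau1 S1 ->
  of_shape D tn Z t2 tau2 S2 ->
  of_shape D tn Z (VNode t1 t2) (union_asg t1 tau1 tau2)
    (bowtie D tn (VNode t1 t2) t1 t2 S1 S2).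
Proof.
move=> Hc _ Hsub Hs1 Hs2.
have Hc' := Hc.
case: Hc' => [[Hac _ _] [[HuT _] [Hi [Hii [Hiii [Hiv Hv]]]]]].
have Huq : uniq (leaves t1 ++ leaves t2) := sub_uniq Hsub HuT.
have disj : forall x, x \in leaves t1 -> x \notin leaves t2.
  move=> x Hx; move: Huq; rewrite cat_uniq => /and3P [_ Hh _].
  apply/negP => Hx2; move/negP: Hh; apply; apply/hasP; by exists x.
have n1 : t1 != VNode t1 t2 := node_neql _ _.
have n2 : t2 != VNode t1 t2 := node_neqr _ _.
have n12 : t1 != t2.
  apply/eqP => E.
  have [x Hx] : exists x, x \in leaves t1.
    by move: (leaves_nil t1); case: (leaves t1) => // x l _; exists x; rewrite inE eqxx.
  by move: (disj x Hx); rewrite -E Hx.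
have S1O : forall w, w \in S1 -> w \in Ogates D tn t1 by move=> w; rewrite Hs1 inE => /andP [].
have S2O : forall w, w \in S2 -> w \in Ogates D tn t2 by move=> w; rewrite Hs2 inE => /andP [].
rewrite /of_shape /bowtie; apply/setP => s; rewrite !inE.
case Hso: (tn s == VNode t1 t2) => //=; case Hand: (is_and D s) => //=.
move/eqP: Hso => Hso.
have Hks : kind D s = GOr.
  move: (Hiii _ _ _ Hso) Hand; rewrite /is_input /is_and; by case: (kind D s).
set ov := (fun u : G => _).
have ovO1 : forall w, tn w = t1 -> ~~ is_and D w -> ov w = Some (w \in S1).
  move=> w Hw Hnw; rewrite /ov.
  have nS2 : w \notin S2.
    apply/negP => /S2O; rewrite inE Hw => /andP [/eqP E _]; by rewrite E eqxx in n12.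
  rewrite inE (negbTE nS2) orbF; case: ifP => // H1.
  by rewrite !inE H1 Hw eqxx Hnw.
have ovO2 : forall w, tn w = t2 -> ~~ is_and D w -> ov w = Some (w \in S2).
  move=> w Hw Hnw; rewrite /ov.
  have nS1 : w \notin S1.
    apply/negP => /S1O; rewrite inE Hw => /andP [/eqP E _]; by rewrite E eqxx in n12.
  rewrite inE (negbTE nS1) /=; case: ifP => // H1.
  by rewrite !inE H1 Hw eqxx Hnw orbT.
have ovN : forall w, tn w = VNode t1 t2 -> ov w = None.
  move=> w Hw; rewrite /ov !inE Hw.
  have -> : (w \in S1) = false.
    apply/negP => /S1O; rewrite inE Hw => /andP [/eqP E _]; by rewrite E eqxx in n1.
  have -> : (w \in S2) = false.
    apply/negP => /S2O; rewrite inE Hw => /andP [/eqP E _]; by rewrite E eqxx in n2.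
  by rewrite eq_sym (negbTE n1) eq_sym (negbTE n2) !andbF.
have Hab : forall u, wire D u s -> exists a b,
    [/\ forall w, wire D w u <-> w = a \/ w = b, tn a = t1, tn b = t2,
        ~~ is_and D a & ~~ is_and D b] /\ kind D u = GAnd /\ tn u = VNode t1 t2.
  move=> u Hw; case: (Hv _ _ Hw) => [[Hs _]|[_ [Hau Htu]]]; first by rewrite Hs in Hand.
  have Hku : kind D u = GAnd by move: Hau; rewrite /is_and; case: (kind D u).
  have [v1 [v2 [Hne Hwire Htn]]] := Hiv _ Hau.
  have Hch : forall v, wire D v u -> ~~ is_and D v /\ (tn v = t1 \/ tn v = t2).
    move=> v Hvu; case: (Hv _ _ Hvu) => [[_ [Hna Hcv]]|[Hor _]].
      by split => //; apply: child_node; rewrite -Hso -Htu.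
    by move: Hor; rewrite /is_or Hku.
  have [Hn1 Ht1] := Hch v1 (proj2 (Hwire v1) (or_introl erefl)).
  have [Hn2 Ht2] := Hch v2 (proj2 (Hwire v2) (or_intror erefl)).
  have Htu' : tn u = VNode t1 t2 by rewrite Htu.
  case: Ht1 => E1.
    have E2 : tn v2 = t2 by case: Ht2 => // E2; rewrite E1 E2 in Htn.
    by exists v1, v2.
  have E2 : tn v2 = t1 by case: Ht2 => // E2; rewrite E1 E2 in Htn.
  exists v2, v1; split => //; split => // w; rewrite Hwire; tauto.
rewrite evalo_fix // /eval_step ovN // Hks.
apply/existsP/existsP.
  case=> u /andP [Hw Hu].
  have [a [b [[Hwab Ha1 Hb2 Hna Hnb] [Hku Htu]]]] := Hab u Hw.
  move: Hu; rewrite evalo_fix // /eval_step ovN // Hku (forall_two _ Hwab).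
  rewrite !evalo_fix // /eval_step ovO1 // ovO2 //= => /andP [Ha Hb].
  move: Ha; rewrite Hs1 inE => /andP [_ /existsP [sa Hsa]].
  move: Hb; rewrite Hs2 inE => /andP [_ /existsP [sb Hsb]].
  exists [ffun x => if x \in leaves t1 then sa x else sb x].
  rewrite /sat evalo_fix // /eval_step /= Hks; apply/existsP; exists u; rewrite Hw /=.
  rewrite evalo_fix // /eval_step /= Hku (forall_two _ Hwab); apply/andP; split.
    apply: (etrans _ Hsa); apply: iter_agree => x Hx.
    have Hx1 : x \in leaves t1 by have := varsub_vvar Hc Hx; rewrite Ha1 inE.
    by apply: mergeL => //; rewrite ffunE Hx1.
  apply: (etrans _ Hsb); apply: iter_agree => x Hx.
  have Hx2 : x \in leaves t2 by have := varsub_vvar Hc Hx; rewrite Hb2 inE.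
  have Hx1 : x \notin leaves t1 by apply/negP => /disj; rewrite Hx2.
  by apply: mergeR => //; rewrite ffunE (negbTE Hx1).
case=> sg Hsg.
move: Hsg; rewrite /sat evalo_fix // /eval_step /= Hks => /existsP [u /andP [Hw Hu]].
exists u; rewrite Hw /=.
have [a [b [[Hwab Ha1 Hb2 Hna Hnb] [Hku Htu]]]] := Hab u Hw.
move: Hu; rewrite evalo_fix // /eval_step /= Hku (forall_two _ Hwab) => /andP [Ha Hb].
rewrite evalo_fix // /eval_step ovN // Hku (forall_two _ Hwab).
rewrite !evalo_fix // /eval_step ovO1 // ovO2 //=.
apply/andP; split.
  rewrite Hs1 inE !inE Ha1 eqxx Hna /=; apply/existsP; exists sg.
  apply: (etrans _ Ha); symmetry; apply: iter_agree => x Hx.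
  have Hx1 : x \in leaves t1 by have := varsub_vvar Hc Hx; rewrite Ha1 inE.
  by apply: mergeL.
rewrite Hs2 inE !inE Hb2 eqxx Hnb /=; apply/existsP; exists sg.
apply: (etrans _ Hb); symmetry; apply: iter_agree => x Hx.
have Hx2 : x \in leaves t2 by have := varsub_vvar Hc Hx; rewrite Hb2 inE.
have Hx1 : x \notin leaves t1 by apply/negP => /disj; rewrite Hx2.
by apply: mergeR.
Qed.
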